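(* The category of exact $\mathfrak{K}$-modules $M$ with $\alpha_{12}=0$ and $\alpha_{21}=0$ is equivalent to the category of $\mathbb{Z}/2$-graded cohomologically trivial $\mathfrak{S}$-modules, via $M\mapsto(M_0,t_0)$. A homomorphism $f_0\colon M_0\to L_0$ between two $\mathbb{Z}/2$-graded cohomologically trivial $\mathfrak{S}$-modules induces an injective or surjective homomorphism of exact $\mathfrak{K}$-modules if and only if $f_0$ is injective or surjective, respectively.
   Context: Fix a prime $p$, $N(x)=1+x+\dots+x^{p-1}$, $\mathfrak{S}=\mathbb{Z}[t]/(t^p-1)$. A $\mathfrak{K}$-module $M$ amounts to $\mathbb{Z}/2$-graded abelian groups $M_0,M_1,M_2$ with homomorphisms $\alpha_{jk}\colon M_k\to M_j$ ($j\neq k$; $\alpha_{12},\alpha_{21}$ grading-reversing, others grading-preserving) with $\alpha_{jk}\alpha_{km}=0$ for $\{j,k,m\}=\{0,1,2\}$ and, for $t_0:=1-\alpha_{02}\alpha_{20}$ on $M_0$, $s_1:=1-\alpha_{12}\alpha_{21}$ on $M_1$, $t_2:=1-\alpha_{20}\alpha_{02}$, $s_2:=1-\alpha_{21}\alpha_{12}$ on $M_2$: $\alpha_{01}\alpha_{10}=N(t_0)$, $\alpha_{10}\alpha_{01}=N(s_1)$, $N(t_2)+N(s_2)=p$; morphisms are triples of grading-preserving maps commuting with all $\alpha_{jk}$. $M$ is exact if the cyclic sequences $M_0\xrightarrow{\alpha_{10}}M_1\xrightarrow{\alpha_{21}}M_2\xrightarrow{\alpha_{02}}M_0$ and $M_0\xrightarrow{\alpha_{20}}M_2\xrightarrow{\alpha_{12}}M_1\xrightarrow{\alpha_{01}}M_0$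 are exact. An $\mathfrak{S}$-module is cohomologically trivial if $\ker(1-t)=\operatorname{im}N(t)$ and $\operatorname{im}(1-t)=\ker N(t)$. *)

(* Defs.v *)
From HB Require Import structures.
From mathcomp Require Import all_boot all_order all_algebra.
Set Implicit Arguments. Unset Strict Implicit. Unset Printing Implicit Defensive.
Import GRing.Theory.
Local Open Scope ring_scope.

Definition hom (U V : zmodType) (f : U -> V) : Prop :=
  forall x y, f (x + y) = f x + f y.

(* A Z/2-grading on an abelian group V is a decomposition V = V^0 (+) V^1,
   encoded by the additive idempotent projection e onto V^0 (along V^1). *)
Definition grading (V : zmodType) (e : V -> V) : Prop :=
  hom e /\ forall x, e (e x) = e x.

Definition gpres (U V : zmodType) (eU : U -> U) (eV : V -> V) (f : U -> V) :=
  forall x, f (eU x) = eV (f x).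
(* grading-reversing map: maps U^0 to V^1 and U^1 to V^0 *)
Definition grev (U V : zmodType) (eU : U -> U) (eV : V -> V) (f : U -> V) :=
  forall x, f (eU x) = f x - eV (f x).

Definition Nop (p : nat) (V : zmodType) (t : V -> V) (x : V) : V :=
  \sum_(i < p) iter i t x.

Unset Implicit Arguments.
Record Kdata := KData {
  K0 : zmodType; K1 : zmodType; K2 : zmodType;
  e0 : K0 -> K0; e1 : K1 -> K1; e2 : K2 -> K2;
  a01 : K1 -> K0; a02 : K2 -> K0;
  a10 : K0 -> K1; a12 : K2 -> K1;
  a20 : K0 -> K2; a21 : K1 -> K2 }.
Set Implicit Arguments.

Definition t0 (M : Kdata) (x : K0 M) : K0 M := x - a02 M (a20 M x).
Definition s1 (M : Kdata) (x : K1 M) : K1 M := x - a12 M (a21 M x).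
Definition t2 (M : Kdata) (x : K2 M) : K2 M := x - a20 M (a02 M x).
Definition s2 (M : Kdata) (x : K2 M) : K2 M := x - a21 M (a12 M x).

Definition is_Kmod (p : nat) (M : Kdata) : Prop :=
  [/\ grading (e0 M) /\ grading (e1 M) /\ grading (e2 M),
      [/\ hom (a01 M), hom (a02 M) & hom (a10 M)] /\
      [/\ hom (a12 M), hom (a20 M) & hom (a21 M)],
      [/\ gpres (e1 M) (e0 M) (a01 M), gpres (e2 M) (e0 M) (a02 M) &
          gpres (e0 M) (e1 M) (a10 M)] /\ [/\ grev (e2 M) (e1 M) (a12 M),
          gpres (e0 M) (e2 M) (a20 M) & grev (e1 M) (e2 M) (a21 M)],
      [/\ (forall x, a01 M (a12 M x) = 0), (forall x, a02 M (a21 M x) = 0) &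
          (forall x, a10 M (a02 M x) = 0)] /\ [/\ (forall x, a12 M (a20 M x) = 0),
          (forall x, a20 M (a01 M x) = 0) & (forall x, a21 M (a10 M x) = 0)] &
      [/\ (forall x, a01 M (a10 M x) = Nop p (@t0 M) x),
          (forall x, a10 M (a01 M x) = Nop p (@s1 M) x) &
          (forall x, Nop p (@t2 M) x + Nop p (@s2 M) x = x *+ p)]].

Definition exact_at (U V W : zmodType) (f : U -> V) (g : V -> W) : Prop :=
  forall y, (exists x, f x = y) <-> g y = 0.

Definition Kexact (M : Kdata) : Prop :=
  [/\ exact_at (a10 M) (a21 M), exact_at (a21 M) (a02 M) & exact_at (a02 M) (a10 M)] /\
  [/\ exact_at (a20 M) (a12 M), exact_at (a12 M) (a01 M) & exact_at (a01 M) (a20 M)].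

Definition goodK (p : nat) (M : Kdata) : Prop :=
  [/\ is_Kmod p M, Kexact M, ((forall x, a12 M x = 0)) & ((forall x, a21 M x = 0))].

Definition Kmor (M L : Kdata) (f0 : K0 M -> K0 L) (f1 : K1 M -> K1 L)
    (f2 : K2 M -> K2 L) : Prop :=
  [/\ hom f0 /\ hom f1 /\ hom f2,
      gpres (e0 M) (e0 L) f0 /\ gpres (e1 M) (e1 L) f1 /\ gpres (e2 M) (e2 L) f2 &
      [/\ (forall x, f0 (a01 M x) = a01 L (f1 x)), (forall x, f0 (a02 M x) = a02 L (f2 x)) &
          (forall x, f1 (a10 M x) = a10 L (f0 x))] /\ [/\ (forall x, f1 (a12 M x) = a12 L (f2 x)),
          (forall x, f2 (a20 M x) = a20 L (f0 x)) & (forall x, f2 (a21 M x) = a21 L (f1 x))]].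

(* Z/2-graded S-modules, S = Z[t]/(t^p - 1): graded group with a grading-preserving
   additive t satisfying t^p = 1 *)
Definition is_Smod (p : nat) (A : zmodType) (e t : A -> A) : Prop :=
  [/\ grading e, hom t, gpres e e t & (forall x, iter p t x = x)].

Definition coh_trivial (p : nat) (A : zmodType) (t : A -> A) : Prop :=
  forall x, ((x - t x = 0) <-> exists y, Nop p t y = x) /\
            ((exists y, y - t y = x) <-> Nop p t x = 0).

Definition Smor (A B : zmodType) (eA tA : A -> A) (eB tB : B -> B) (f : A -> B) :=
  [/\ hom f, gpres eA eB f & (forall x, f (tA x) = tB (f x))].

Definition surj (A B : Type) (f : A -> B) : Prop := forall y, exists x, f x = y.

(* Main.v *)
Require Import Defs.
From mathcomp Require Import all_boot all_order all_algebra.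
From HB Require Import structures.
From mathcomp Require Import boolp.
Set Implicit Arguments. Unset Strict Implicit. Unset Printing Implicit Defensive.
Import GRing.Theory.
Local Open Scope ring_scope.

Section Hom.
Variables (U V : zmodType) (f : U -> V) (hf : Defs.hom f).
Lemma hom0 : f 0 = 0.
Proof. by apply/eqP; rewrite -(subrr (f 0)) -{2}(addr0 0) hf addrK. Qed.
Lemma homN x : f (- x) = - f x.
Proof. by apply/eqP; rewrite -subr_eq0 opprK -hf addNr hom0. Qed.
Lemma homB x y : f (x - y) = f x - f y.
Proof. by rewrite hf homN. Qed.
Lemma hom_sum n (F : 'I_n -> U) : f (\sum_(i < n) F i) = \sum_(i < n) f (F i).
Proof. by apply: (big_morph f hf hom0). Qed.
Lemma homMn x n : f (x *+ n) = f x *+ n.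
Proof. by elim: n => [|n IH]; rewrite ?mulr0n ?hom0 // !mulrS hf IH. Qed.
Lemma hom_inj : (forall x, f x = 0 -> x = 0) -> injective f.
Proof. by move=> H x y e; apply/eqP; rewrite -subr_eq0 (H (x - y)) // homB e subrr. Qed.
Lemma hom_ker : injective f -> forall x, f x = 0 -> x = 0.
Proof. by move=> inj x; rewrite -hom0 => /inj. Qed.
End Hom.

Lemma hom_iter (V : zmodType) (t : V -> V) n : Defs.hom t -> Defs.hom (iter n t).
Proof. by move=> ht; elim: n => [|n IH] x y //=; rewrite IH ht. Qed.

Lemma Nop_hom p (V : zmodType) (t : V -> V) : Defs.hom t -> Defs.hom (Nop p t).
Proof.
move=> ht x y; rewrite /Nop -big_split /=; apply: eq_bigr => i _; exact: hom_iter.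
Qed.

Lemma Nop_comm p (U V : zmodType) (t : U -> U) (t' : V -> V) (f : U -> V) :
  Defs.hom f -> (forall x, f (t x) = t' (f x)) ->
  forall x, f (Nop p t x) = Nop p t' (f x).
Proof.
move=> hf ft x; rewrite /Nop hom_sum //; apply: eq_bigr => i _.
by elim: (nat_of_ord i) => [|n IH] //=; rewrite ft IH.
Qed.

Lemma Nop_fix p (V : zmodType) (t : V -> V) x : t x = x -> Nop p t x = x *+ p.
Proof.
move=> tx; rewrite /Nop (eq_bigr (fun _ => x)); first by rewrite sumr_const card_ord.
by move=> i _; elim: (nat_of_ord i) => [|n IH] //=; rewrite IH.
Qed.

Lemma Nop_ext p (V : zmodType) (t t' : V -> V) : t =1 t' -> Nop p t =1 Nop p t'.
Proof. by move=> e x; apply: eq_bigr => i _; apply: eq_iter. Qed.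

Lemma Nop_tel p (V : zmodType) (t : V -> V) x : Defs.hom t ->
  t (Nop p t x) - Nop p t x = iter p t x - x.
Proof.
move=> ht; rewrite /Nop hom_sum // -sumrB.
rewrite (eq_bigr (fun i : 'I_p => iter i.+1 t x - iter i t x)) //.
by rewrite -(big_mkord xpredT (fun i => iter i.+1 t x - iter i t x)) telescope_sumr.
Qed.

Lemma subKr' (V : zmodType) (x a : V) : x - (x - a) = a.
Proof. by rewrite opprB addrC subrK. Qed.
Section GoodK.
Variables (p : nat) (M : Kdata) (HM : goodK p M).

Lemma gk_homs : [/\ Defs.hom (a01 M), Defs.hom (a02 M), Defs.hom (a10 M) & Defs.hom (a20 M)].
Proof. by case: HM => [[_ [[? ? ?] [_ ? _]] _ _ _] _ _ _]. Qed.
Lemma gk_e0 : Defs.hom (e0 M). Proof. by case: HM => [[[[? _] _] _ _ _ _] _ _ _]. Qed.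
Lemma gk_e2 : Defs.hom (e2 M). Proof. by case: HM => [[[_ [_ [? _]]] _ _ _ _] _ _ _]. Qed.
Lemma gk_gp : [/\ gpres (e1 M) (e0 M) (a01 M), gpres (e2 M) (e0 M) (a02 M),
   gpres (e0 M) (e1 M) (a10 M) & gpres (e0 M) (e2 M) (a20 M)].
Proof. by case: HM => [[_ _ [[? ? ?] [_ ? _]] _ _] _ _ _]. Qed.
Lemma gk_z : (forall x, a10 M (a02 M x) = 0) /\ (forall x, a20 M (a01 M x) = 0).
Proof. by case: HM => [[_ _ _ [[_ _ ?] [_ ? _]] _] _ _ _]. Qed.
Lemma gk_N x : a01 M (a10 M x) = Nop p (@t0 M) x.
Proof. by case: HM => [[_ _ _ _ [? _ _]] _ _ _]. Qed.

Lemma gk_inj01 y : a01 M y = 0 -> y = 0.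
Proof.
case: HM => _ [_ [_ E _]] H12 _ /(E y).2 [x <-]; exact: H12.
Qed.
Lemma gk_inj02 y : a02 M y = 0 -> y = 0.
Proof.
case: HM => _ [[_ E _] _] _ H21 /(E y).2 [x <-]; exact: H21.
Qed.
Lemma gk_surj10 y : exists x, a10 M x = y.
Proof. case: HM => _ [[E _ _] _] _ H21; apply/(E y); exact: H21. Qed.
Lemma gk_surj20 y : exists x, a20 M x = y.
Proof. case: HM => _ [_ [E _ _]] H12 _; apply/(E y); exact: H12. Qed.
Lemma gk_ker10 x : a10 M x = 0 <-> exists v, a02 M v = x.
Proof. case: HM => _ [[_ _ E] _] _ _; exact: (iff_sym (E x)). Qed.
Lemma gk_ker20 x : a20 M x = 0 <-> exists v, a01 M v = x.
Proof. case: HM => _ [_ [_ _ E]] _ _; exact: (iff_sym (E x)). Qed.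

Lemma gk_t0 x : x - t0 x = a02 M (a20 M x).
Proof. by rewrite /t0 subKr'. Qed.

Lemma gk_homt0 : Defs.hom (@t0 M).
Proof.
case: gk_homs => _ h02 _ h20 x y.
by rewrite /t0 h20 h02 opprD addrACA.
Qed.

Lemma gk_Smod : is_Smod p (@e0 M) (@t0 M).
Proof.
case: gk_homs => h01 h02 h10 h20; case: gk_gp => g01 g02 g10 g20.
split.
- by case: HM => [[[? _] _ _ _ _] _ _ _].
- exact: gk_homt0.
- by move=> x; rewrite /t0 g20 g02 homB //; exact: gk_e0.
- move=> x; apply/eqP; rewrite -subr_eq0 -Nop_tel; last exact: gk_homt0.
  rewrite -opprB gk_t0 -gk_N (proj2 gk_z) (hom0 h02) oppr0 //.
Qed.

Lemma gk_coh : coh_trivial p (@t0 M).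
Proof.
case: gk_homs => h01 h02 h10 h20.
move=> x; split.
- rewrite gk_t0; split.
  + move/gk_inj02/gk_ker20 => [v <-]; have [w <-] := gk_surj10 v.
    by exists w; rewrite gk_N.
  + by move=> [y <-]; rewrite -gk_N gk_z.2 hom0.
- split.
  + move=> [y <-]; rewrite -gk_N gk_t0 gk_z.1 hom0 //.
  + rewrite -gk_N => /gk_inj01/gk_ker10 [v <-]; have [w <-] := gk_surj20 v.
    by exists w; rewrite gk_t0.
Qed.

End GoodK.
Section Mor.
Variables (p : nat) (M L : Kdata) (HM : goodK p M) (HL : goodK p L).

Lemma mor_Smor f0 f1 f2 : @Kmor M L f0 f1 f2 -> Smor (@e0 M) (@t0 M) (@e0 L) (@t0 L) f0.
Proof.
case=> [[h0 _] [g0 _] [[_ c02 _] [_ c20 _]]]; split=> // x.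
by rewrite /t0 homB // c02 c20.
Qed.

Lemma mor_faith f0 f1 f2 f0' f1' f2' : @Kmor M L f0 f1 f2 -> @Kmor M L f0' f1' f2' -> f0 =1 f0' ->
  f1 =1 f1' /\ f2 =1 f2'.
Proof.
case=> _ _ [[_ _ c10] [_ c20 _]]; case=> _ _ [[_ _ c10'] [_ c20' _]] e; split=> z.
- by have [x <-] := gk_surj10 HM z; rewrite c10 c10' e.
- by have [x <-] := gk_surj20 HM z; rewrite c20 c20' e.
Qed.

Lemma mor_injsurj f0 f1 f2 : @Kmor M L f0 f1 f2 ->
  ((injective f0 /\ injective f1 /\ injective f2) <-> injective f0) /\
  ((surj f0 /\ surj f1 /\ surj f2) <-> surj f0).
Proof.
case=> [[h0 [h1 h2]] _ [[c01 c02 c10] [_ c20 _]]].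
case: (gk_homs HM) => h01 h02 _ _; case: (gk_homs HL) => h01' h02' _ _.
split; split; try by case.
- move=> i0; split=> //; split; apply: hom_inj => // z fz.
  + by apply: (gk_inj01 HM); apply: (hom_ker h0 i0); rewrite c01 fz (hom0 h01').
  + by apply: (gk_inj02 HM); apply: (hom_ker h0 i0); rewrite c02 fz (hom0 h02').
- move=> s0; split=> //; split=> z.
  + have [y <-] := gk_surj10 HL z; have [x <-] := s0 y; exists (a10 M x); exact: c10.
  + have [y <-] := gk_surj20 HL z; have [x <-] := s0 y; exists (a20 M x); exact: c20.
Qed.

Lemma Smor_N g : Smor (@e0 M) (@t0 M) (@e0 L) (@t0 L) g ->
  forall x, g (Nop p (@t0 M) x) = Nop p (@t0 L) (g x).
Proof. by case=> hg _ c; apply: Nop_comm. Qed.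

Lemma mor_full g : Smor (@e0 M) (@t0 M) (@e0 L) (@t0 L) g -> exists f1 f2, @Kmor M L g f1 f2.
Proof.
move=> Sg; have [hg gg cg] := Sg.
case: (gk_homs HM) => h01 h02 h10 h20; case: (gk_homs HL) => h01' h02' h10' h20'.
case: (gk_gp HM) => g01 g02 g10 g20; case: (gk_gp HL) => g01' g02' g10' g20'.
have wd10 x x' : a10 M x = a10 M x' -> a10 L (g x) = a10 L (g x').
  move=> e; apply/eqP; rewrite -subr_eq0 -homB // -homB //.
  have /(gk_ker10 HM) [v ev] : a10 M (x - x') = 0 by rewrite homB // e subrr.
  have [w ew] := gk_surj20 HM v.
  by rewrite -ev -ew -gk_t0 homB // cg gk_t0 (proj1 (gk_z HL)).
have wd20 x x' : a20 M x = a20 M x' -> a20 L (g x) = a20 L (g x').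
  move=> e; apply/eqP; rewrite -subr_eq0 -homB // -(homB hg); apply/eqP.
  apply: (gk_inj02 HL); rewrite -gk_t0 -cg -homB // gk_t0.
  by rewrite homB // e subrr (hom0 h02) (hom0 hg).
pose pre1 z := projT1 (cid (gk_surj10 HM z)).
have pre1P z : a10 M (pre1 z) = z by rewrite /pre1; case: cid.
pose pre2 z := projT1 (cid (gk_surj20 HM z)).
have pre2P z : a20 M (pre2 z) = z by rewrite /pre2; case: cid.
pose f1 z := a10 L (g (pre1 z)).
pose f2 z := a20 L (g (pre2 z)).
have k1 x : f1 (a10 M x) = a10 L (g x) by apply: wd10; rewrite pre1P.
have k2 x : f2 (a20 M x) = a20 L (g x) by apply: wd20; rewrite pre2P.
have hf1 : Defs.hom f1.
  move=> z z'; have [x <-] := gk_surj10 HM z; have [x' <-] := gk_surj10 HM z'.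
  by rewrite -h10 !k1 hg h10'.
have hf2 : Defs.hom f2.
  move=> z z'; have [x <-] := gk_surj20 HM z; have [x' <-] := gk_surj20 HM z'.
  by rewrite -h20 !k2 hg h20'.
exists f1, f2; split.
- by split.
- split=> //; split=> z.
  + by have [x <-] := gk_surj10 HM z; rewrite -g10 !k1 gg g10'.
  + by have [x <-] := gk_surj20 HM z; rewrite -g20 !k2 gg g20'.
- split; split=> z.
  + have [x <-] := gk_surj10 HM z; rewrite k1 (gk_N HM) (gk_N HL); exact: Smor_N.
  + have [x <-] := gk_surj20 HM z; rewrite k2 -!gk_t0 homB // cg //.
  + exact: k1.
  + by case: HM => _ _ -> _; case: HL => _ _ -> _; rewrite (hom0 hf1).
  + exact: k2.
  + by case: HM => _ _ _ ->; case: HL => _ _ _ ->; rewrite (hom0 hf2).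
Qed.
End Mor.
Section Sub.
Variables (A : zmodType) (f : A -> A).
Definition Imb : {pred A} := fun x => `[< Defs.hom f -> exists y, f y = x >].
Lemma Imb_zmod : zmod_closed Imb.
Proof.
split; first by apply/asboolP => hf; exists 0; rewrite hom0.
move=> x y /asboolP hx /asboolP hy; apply/asboolP => hf.
have [a <-] := hx hf; have [b <-] := hy hf; exists (a - b); exact: homB.
Qed.
Inductive subg : predArgType := Subg u & u \in Imb.
Definition sval w : A := let: Subg u _ := w in u.
HB.instance Definition _ := [isSub of subg for sval].
HB.instance Definition _ := [Choice of subg by <:].
HB.instance Definition _ := GRing.SubChoice_isSubZmodule.Build A Imb subg Imb_zmod.
Lemma svalD (x y : subg) : sval (x + y) = sval x + sval y. Proof. by []. Qed.
Lemma sval0 : sval 0 = 0. Proof. by []. Qed.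
End Sub.

Section Constr.
Variables (p : nat) (A : zmodType) (e t : A -> A).
Definition NN := Nop p t.
Definition DD x := x - t x.
Definition S1 : zmodType := subg NN.
Definition S2 : zmodType := subg DD.
Definition ce1 (z : S1) : S1 := insubd z (e (val z)).
Definition ce2 (z : S2) : S2 := insubd z (e (val z)).
Definition c10 (x : A) : S1 := insubd 0 (NN x).
Definition c20 (x : A) : S2 := insubd 0 (DD x).
Definition Mc : Kdata := KData A S1 S2 e ce1 ce2 (fun z : S1 => val z) (fun z : S2 => val z)
  c10 (fun _ : S2 => (0 : S1)) c20 (fun _ : S1 => (0 : S2)).

Hypotheses (Hs : is_Smod p e t) (Hc : coh_trivial p t).

Lemma c_ht : Defs.hom t. Proof. by case: Hs. Qed.
Lemma c_he : Defs.hom e. Proof. by case: Hs => [[]]. Qed.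
Lemma c_ee x : e (e x) = e x. Proof. by case: Hs => [[]]. Qed.
Lemma c_et x : e (t x) = t (e x). Proof. by case: Hs => _ _ ->. Qed.
Lemma c_hN : Defs.hom NN. Proof. exact: Nop_hom c_ht. Qed.
Lemma c_hD : Defs.hom DD.
Proof. by move=> x y; rewrite /DD c_ht opprD addrACA. Qed.
Lemma memI (f : A -> A) (hf : Defs.hom f) x : x \in Imb f <-> exists y, f y = x.
Proof. by split=> [/asboolP H|H]; [exact: H | apply/asboolP]. Qed.
Lemma c_eN x : e (NN x) = NN (e x).
Proof. apply: Nop_comm; [exact: c_he | by move=> y; rewrite c_et]. Qed.
Lemma c_eD x : e (DD x) = DD (e x).
Proof. by rewrite /DD (homB c_he) c_et. Qed.

Lemma hv1 : Defs.hom (fun z : S1 => val z). Proof. by []. Qed.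
Lemma hv2 : Defs.hom (fun z : S2 => val z). Proof. by []. Qed.

Lemma svMn (z : S1) n : sval (z *+ n) = sval z *+ n.
Proof. exact: (homMn hv1). Qed.

Lemma v10 x : val (c10 x) = NN x.
Proof. by rewrite /c10 insubdK //; apply/(memI c_hN); exists x. Qed.
Lemma v20 x : val (c20 x) = DD x.
Proof. by rewrite /c20 insubdK //; apply/(memI c_hD); exists x. Qed.
Lemma ve1 z : val (ce1 z) = e (val z).
Proof.
rewrite /ce1 insubdK //; have /(memI c_hN) [y <-] := valP z.
by apply/(memI c_hN); exists (e y); rewrite c_eN.
Qed.
Lemma ve2 z : val (ce2 z) = e (val z).
Proof.
rewrite /ce2 insubdK //; have /(memI c_hD) [y <-] := valP z.
by apply/(memI c_hD); exists (e y); rewrite c_eD.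
Qed.

Lemma inN (z : S1) : exists y, NN y = val z.
Proof. exact/(memI c_hN)/valP. Qed.
Lemma inD (z : S2) : exists y, DD y = val z.
Proof. exact/(memI c_hD)/valP. Qed.
Lemma tN (z : S1) : t (val z) = val z.
Proof.
apply/eqP; rewrite eq_sym -subr_eq0; apply/eqP; apply/(proj1 (Hc _)).
exact: inN.
Qed.
Lemma NDz (z : S2) : NN (val z) = 0.
Proof. by apply/(proj2 (Hc _)); exact: inD. Qed.

Lemma Mc_t0 x : @t0 Mc x = t x.
Proof. by rewrite /t0 /= v20 /DD subKr'. Qed.

Lemma Mc_good : goodK p Mc.
Proof.
have he := c_he; have ht := c_ht; have hN := c_hN; have hD := c_hD.
have h10 : Defs.hom c10 by move=> x y; apply: val_inj; rewrite /= !v10 hN.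
have h20 : Defs.hom c20 by move=> x y; apply: val_inj; rewrite /= !v20 hD.
have he1 : Defs.hom ce1 by move=> x y; apply: val_inj; rewrite /= !ve1 /= he.
have he2 : Defs.hom ce2 by move=> x y; apply: val_inj; rewrite /= !ve2 /= he.
have hz1 : Defs.hom (fun _ : S2 => (0 : S1)) by move=> *; rewrite addr0.
have hz2 : Defs.hom (fun _ : S1 => (0 : S2)) by move=> *; rewrite addr0.
split=> //; last first.
- split; split.
  + move=> y; split=> // _; have [x ex] := inN y; exists x; apply: val_inj; by rewrite v10.
  + move=> y; split=> [[x <-] //|/= y0]; exists 0; apply: val_inj; rewrite /= y0 //.
  + move=> y; split=> [[x <-]|/= H].
      by apply: val_inj; rewrite /= v10 NDz.
    have : NN y = 0 by rewrite -v10 H.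
    move/(proj2 (Hc y)) => [u eu]; exists (c20 u); by rewrite v20.
  + move=> y; split=> // _; have [x ex] := inD y; exists x; apply: val_inj; by rewrite v20.
  + move=> y; split=> [[x <-] //|/= y0]; exists 0; apply: val_inj; rewrite /= y0 //.
  + move=> y; split=> [[x <-]|/= H].
      by apply: val_inj; rewrite /= v20 /DD tN subrr.
    have : DD y = 0 by rewrite -v20 H.
    move/(proj1 (Hc y)) => [u eu]; exists (c10 u); by rewrite v10.
split.
- split; first by case: Hs.
  split; split=> // x; apply: val_inj; by rewrite !(ve1, ve2) c_ee.
- by split; split.
- split; split=> x /=.
  + by rewrite ve1.
  + by rewrite ve2.
  + by apply: val_inj; rewrite /= v10 ve1 v10 c_eN.
  + by rewrite (hom0 he1) subrr.
  + by apply: val_inj; rewrite /= v20 ve2 v20 c_eD.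
  + by rewrite (hom0 he2) subrr.
- split; split=> x //=.
  + by apply: val_inj; rewrite /= v10 NDz.
  + by apply: val_inj; rewrite /= v20 /DD tN subrr.
- split=> x /=.
  + by rewrite v10; apply: Nop_ext => y; rewrite Mc_t0.
  + rewrite (@Nop_fix p _ (@s1 Mc) x); last by rewrite /s1 /= subr0.
    apply: val_inj; rewrite /= v10 svMn /NN Nop_fix //; exact: tN.
  + rewrite (@Nop_fix p _ (@s2 Mc) x); last by rewrite /s2 /= subr0.
    suff -> : Nop p (@t2 Mc) x = 0 by rewrite add0r.
    apply: val_inj; rewrite /= (@Nop_comm p _ _ _ t (fun z : S2 => val z)) //.
      exact: NDz.
    by move=> y; rewrite /t2 /= v20 /DD subKr'.
Qed.

Lemma Mc_iso : exists phi : K0 Mc -> A, Smor (@e0 Mc) (@t0 Mc) e t phi /\ bijective phi.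
Proof.
exists id; split; last by exists id.
by split=> // x; rewrite Mc_t0.
Qed.
End Constr.

Theorem corollary8p2 (p : nat) (hp : prime p) :
  (* the functor M |-> (M_0, t_0) is well defined on objects *)
  (forall M : Kdata, goodK p M ->
     is_Smod p (@e0 M) (@t0 M) /\ coh_trivial p (@t0 M)) /\
  (* ... and on morphisms *)
  (forall (M L : Kdata) f0 f1 f2, goodK p M -> goodK p L -> @Kmor M L f0 f1 f2 ->
     Smor (@e0 M) (@t0 M) (@e0 L) (@t0 L) f0) /\
  (* full: every S-module map M_0 -> L_0 is induced by a K-module morphism *)
  (forall (M L : Kdata) (g : K0 M -> K0 L), goodK p M -> goodK p L ->
     Smor (@e0 M) (@t0 M) (@e0 L) (@t0 L) g ->
     exists f1 f2, @Kmor M L g f1 f2) /\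
  (* faithful *)
  (forall (M L : Kdata) f0 f1 f2 f0' f1' f2', goodK p M -> goodK p L ->
     @Kmor M L f0 f1 f2 -> @Kmor M L f0' f1' f2' -> f0 =1 f0' ->
     f1 =1 f1' /\ f2 =1 f2') /\
  (* essentially surjective *)
  (forall (A : zmodType) (e t : A -> A), is_Smod p e t -> coh_trivial p t ->
     exists M : Kdata, goodK p M /\
       exists phi : K0 M -> A, Smor (@e0 M) (@t0 M) e t phi /\ bijective phi) /\
  (* injectivity / surjectivity is detected on M_0 *)
  (forall (M L : Kdata) f0 f1 f2, goodK p M -> goodK p L -> @Kmor M L f0 f1 f2 ->
     ((injective f0 /\ injective f1 /\ injective f2) <-> injective f0) /\
     ((surj f0 /\ surj f1 /\ surj f2) <-> surj f0)).
Proof.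
split; first by move=> M HM; split; [exact: gk_Smod | exact: gk_coh].
split; first by move=> M L f0 f1 f2 _ _; exact: mor_Smor.
split; first by move=> M L g HM HL Sg; exact: (mor_full HM HL Sg).
split; first by move=> M L f0 f1 f2 f0' f1' f2' HM _ K K' E; exact: (mor_faith HM K K' E).
split; first by move=> A e t Hs Hc; exists (Mc p e t); split;
  [exact: Mc_good | exact: Mc_iso].
by move=> M L f0 f1 f2 HM HL K; exact: (mor_injsurj HM HL K).
Qed.
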